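(* Let $|\psi\rangle$ be an $n$-qubit pure state and let $s\subseteq[n]$. Suppose that for every $X\in\mathcal{P}(s)$ with $X\neq\emptyset$ the subsystems $X$ and $X^c$ carry equispaced nondegenerate Hamiltonians $H_X=\sum_{j=0}^{d_X-1} j\,\epsilon^X|\epsilon_j^X\rangle\langle\epsilon_j^X|$ and $H_{X^c}=\sum_{j=0}^{d_{X^c}-1} j\,\epsilon^{X^c}|\epsilon_j^{X^c}\rangle\langle\epsilon_j^{X^c}|$ with $\epsilon^X,\epsilon^{X^c}>0$ and $d_X=\dim\mathcal{H}_X$, $d_{X^c}=\dim\mathcal{H}_{X^c}$, and the bipartite system $X|X^c$ carries $H_X\otimes\mathbb{I}+\mathbb{I}\otimes H_{X^c}$. Then $$M^{(s)}_B(|\psi\rangle)=2\,M^{(s)}_E(|\psi\rangle);$$ more precisely, $\Delta^{cg}_{X|X^c}(|\psi\rangle)=2\Delta_{X|X^c}(|\psi\rangle)$ for every such $X$.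
   Context: For a system with Hamiltonian $H=\sum_j\epsilon_j|\epsilon_j\rangle\langle\epsilon_j|$, eigenvalues ordered $\epsilon_0=0\le\epsilon_1\le\cdots\le\epsilon_{d-1}$, and a state $\rho$ with eigenvalues $p_0\ge p_1\ge\cdots\ge p_{d-1}$: the passive state is $\rho^p=\sum_j p_j|\epsilon_j\rangle\langle\epsilon_j|$ (minimal energy in the unitary orbit of $\rho$) and the active state is $\rho^{ac}=\sum_j p_{d-1-j}|\epsilon_j\rangle\langle\epsilon_j|$ (maximal energy in the unitary orbit). The battery capacity is $\mathcal{C}(\rho)=\mathrm{tr}(\rho^{ac}H)-\mathrm{tr}(\rho^pH)$. For an $n$-qubit pure state $|\psi\rangle$ and $X\subseteq[n]$, write $\rho_X=\mathrm{tr}_{X^c}|\psi\rangle\langle\psi|$ ($X^c=[n]\setminus X$). The ergotropic gap is $\Delta_{X|X^c}(|\psi\rangle)=\mathrm{tr}(\rho_X^pH_X)+\mathrm{tr}(\rho_{X^c}^pH_{X^c})$, and the battery capacity gap is $\Delta^{cg}_{X|X^c}(|\psi\rangle)=\mathcal{C}(|\psi\rangle\langle\psi|)-\mathcal{C}(\rho_X)-\mathcal{C}(\rho_{X^c})$, where $\mathcal{C}(|\psi\rangle\langle\psi|)$ is taken with respect to $H_X\otimes\mathbb{I}+\mathbb{I}\otimes H_{X^c}$; both gaps are set to $0$ when $X=\emptyset$ or $X=[n]$. $\mathcal{P}(s)$ is the power set of $s$. The ergotropic-gap concentratable entanglement is $M^{(s)}_E(|\psi\rangle)=2^{-|s|}\sum_{X\in\mathcal{P}(s)}\Delta_{X|X^c}(|\psi\rangle)$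 and the battery capacity-gap concentratable entanglement is $M^{(s)}_B(|\psi\rangle)=2^{-|s|}\sum_{X\in\mathcal{P}(s)}\Delta^{cg}_{X|X^c}(|\psi\rangle)$. *)

(* Defs.v *)
(* Scalars: an arbitrary numClosedFieldType C (e.g. complex R
   for R : rcfType, i.e. the complex numbers).  Operators on a finite-dimensional
   Hilbert space with orthonormal computational basis indexed by a finType T are
   functions T -> T -> C (matrix entries); kets are functions T -> C. *)
From Stdlib Require Import ClassicalEpsilon.
From HB Require Import structures.
From mathcomp Require Import all_boot all_order all_algebra.
Unset Printing Implicit Defensive.
Import Order.TTheory GRing.Theory Num.Theory.
Local Open Scope ring_scope.

Definition Ket (C : numClosedFieldType) (T : finType) := T -> C.
Definition Op (C : numClosedFieldType) (T : finType) := T -> T -> C.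
Definition qconf (n : nat) := {ffun 'I_n -> bool}.
Definition conf {n : nat} (X : {set 'I_n}) := {ffun {i : 'I_n | i \in X} -> bool}.
Definition restr {n : nat} (X : {set 'I_n}) (a : qconf n) : conf X :=
  [ffun i => a (val i)].

Section Defs.
Context {C : numClosedFieldType}.



Definition tr {T : finType} (A : Op C T) : C := \sum_(t : T) A t t.
Definition mulop {T : finType} (A B : Op C T) : Op C T :=
  fun s t => \sum_(u : T) A s u * B u t.
Definition outer {T : finType} (v w : Ket C T) : Op C T := fun s t => v s * (w t)^*.

Definition orthonormal {T : finType} (v : 'I_#|T| -> Ket C T) : Prop :=
  forall j k : 'I_#|T|, \sum_(t : T) (v j t)^* * v k t = (j == k)%:R.

Definition sorted_spec_decomp {T : finType} (A : Op C T) (asc : bool)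
    (l : 'I_#|T| -> C) (v : 'I_#|T| -> Ket C T) : Prop :=
  [/\ orthonormal v,
      forall j, l j \is Num.real,
      forall i j : 'I_#|T|, (i <= j)%N -> if asc then l i <= l j else l j <= l i
    & forall s t, A s t = \sum_(j < #|T|) l j * v j s * (v j t)^*].

Lemma eigsys_inhabited {T : finType} :
  inhabited (('I_#|T| -> C) * ('I_#|T| -> Ket C T)).
Proof. exact: (inhabits ((fun _ => 0), (fun _ _ => 0))). Qed.

Definition eigsys {T : finType} (A : Op C T) (asc : bool) :
    ('I_#|T| -> C) * ('I_#|T| -> Ket C T) :=
  epsilon (@eigsys_inhabited T) (fun p => sorted_spec_decomp A asc p.1 p.2).

Definition state_eigs {T : finType} (rho : Op C T) := (eigsys rho false).1.
Definition ham_basis {T : finType} (H : Op C T) := (eigsys H true).2.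

Definition passive {T : finType} (rho H : Op C T) : Op C T :=
  fun s t => \sum_(j < #|T|)
    state_eigs rho j * ham_basis H j s * (ham_basis H j t)^*.
Definition active {T : finType} (rho H : Op C T) : Op C T :=
  fun s t => \sum_(j < #|T|)
    state_eigs rho (rev_ord j) * ham_basis H j s * (ham_basis H j t)^*.

Definition passive_energy {T : finType} (rho H : Op C T) : C :=
  tr (mulop (passive rho H) H).
Definition active_energy {T : finType} (rho H : Op C T) : C :=
  tr (mulop (active rho H) H).
Definition capacity {T : finType} (rho H : Op C T) : C :=
  active_energy rho H - passive_energy rho H.

(* computational basis of the n-qubit space: bit strings 'I_n -> bool *)
(* computational basis of the subsystem X (dimension 2^|X|) *)

Definition normalized {n : nat} (psi : Ket C (qconf n)) : Prop :=
  \sum_(a : qconf n) psi a * (psi a)^* = 1.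

(* partial trace over X^c:  rho_X = tr_{X^c} rho *)
Definition ptrace {n : nat} (X : {set 'I_n}) (rho : Op C (qconf n)) : Op C (conf X) :=
  fun x x' => \sum_(a : qconf n) \sum_(a' : qconf n)
    if [&& restr X a == x, restr X a' == x' & restr (~: X) a == restr (~: X) a']
    then rho a a' else 0.

(* H_X (x) I + I (x) H_{X^c}, acting on the n-qubit space = H_X (x) H_{X^c} *)
Definition bipartite_ham {n : nat} {X : {set 'I_n}}
    (HX : Op C (conf X)) (HXc : Op C (conf (~: X))) : Op C (qconf n) :=
  fun a a' =>
    HX (restr X a) (restr X a') * (restr (~: X) a == restr (~: X) a')%:R
    + (restr X a == restr X a')%:R * HXc (restr (~: X) a) (restr (~: X) a').

Definition ergo_gap {n : nat} (psi : Ket C (qconf n)) (X : {set 'I_n})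
    (HX : Op C (conf X)) (HXc : Op C (conf (~: X))) : C :=
  if (X == set0) || (X == setT) then 0 else
  let rho := outer psi psi in
  passive_energy (ptrace X rho) HX + passive_energy (ptrace (~: X) rho) HXc.

Definition capacity_gap {n : nat} (psi : Ket C (qconf n)) (X : {set 'I_n})
    (HX : Op C (conf X)) (HXc : Op C (conf (~: X))) : C :=
  if (X == set0) || (X == setT) then 0 else
  let rho := outer psi psi in
  capacity rho (bipartite_ham HX HXc)
  - capacity (ptrace X rho) HX - capacity (ptrace (~: X) rho) HXc.

Definition M_E {n : nat} (s : {set 'I_n}) (psi : Ket C (qconf n))
    (HX : forall X : {set 'I_n}, Op C (conf X))
    (HXc : forall X : {set 'I_n}, Op C (conf (~: X))) : C :=
  (2 ^+ #|s|)^-1 * \sum_(X in powerset s) ergo_gap psi X (HX X) (HXc X).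

Definition M_B {n : nat} (s : {set 'I_n}) (psi : Ket C (qconf n))
    (HX : forall X : {set 'I_n}, Op C (conf X))
    (HXc : forall X : {set 'I_n}, Op C (conf (~: X))) : C :=
  (2 ^+ #|s|)^-1 * \sum_(X in powerset s) capacity_gap psi X (HX X) (HXc X).

Definition equispaced {T : finType} (H : Op C T) (eps : C) : Prop :=
  0 < eps /\ exists e : 'I_#|T| -> Ket C T, orthonormal e /\
    forall s t, H s t = \sum_(j < #|T|) (j%:R * eps) * e j s * (e j t)^*.

End Defs.

(* Main.v *)
From Stdlib Require Import ClassicalEpsilon.
Require Import Defs.
From HB Require Import structures.
From mathcomp Require Import all_boot all_order all_algebra.
From mathcomp Require Import ring.
From mathcomp Require Import zify.
Import Order.TTheory GRing.Theory Num.Theory.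
Local Open Scope ring_scope.

Lemma ord_mono_id n (sg : 'I_n -> 'I_n) : injective sg ->
  (forall i j : 'I_n, (i <= j)%N -> (sg i <= sg j)%N) -> forall i, sg i = i.
Proof.
move=> si sm.
have st (i j : 'I_n) : (i < j)%N -> (sg i < sg j)%N.
  move=> hij; have hne : sg i != sg j.
    by rewrite (inj_eq si); apply/eqP => e; rewrite e ltnn in hij.
  by rewrite ltn_neqAle sm ?(ltnW hij) // andbT.
have ge m (hm : (m < n)%N) : (m <= sg (Ordinal hm))%N.
  elim: m hm => [//|m IH] hm.
  have hm' : (m < n)%N by apply: ltnW.
  apply: leq_ltn_trans (IH hm') (st _ _ _); by [].
have ge' (i : 'I_n) : (i <= sg i)%N by case: i => m hm; exact: ge.
have hs : (\sum_i (sg i : nat) = \sum_(i < n) (i : nat))%N.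
  by rewrite [RHS](reindex_inj si).
have : (\sum_(i < n) (sg i - i) == 0)%N.
  apply/eqP; apply/eqP; rewrite -(eqn_add2l (\sum_(i < n) (i : nat))) addn0 -big_split /=.
  by rewrite -hs; apply/eqP; apply: eq_bigr => i _; rewrite subnKC.
rewrite sum_nat_eq0 => /forall_inP h i.
apply: val_inj; apply/eqP; rewrite eqn_leq ge' andbT -subn_eq0.
exact: h.
Qed.

Section Gen.
Context {C : numClosedFieldType} {T : finType}.
Implicit Types (v : 'I_#|T| -> Ket C T) (A : Op C T).

Lemma orth_complete {v} : Defs.orthonormal v ->
  forall s t, \sum_(j < #|T|) v j s * (v j t)^* = (s == t)%:R.
Proof.
move=> ov s t.
pose A : 'M[C]_#|T| := \matrix_(j, i) (v j (enum_val i))^*.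
pose B : 'M[C]_#|T| := \matrix_(i, k) v k (enum_val i).
have AB : A *m B = 1%:M.
  apply/matrixP => j k; rewrite !mxE -(ov j k).
  rewrite (big_enum_val (A:=predT) (fun t => (v j t)^* * v k t)) /=.
  by apply: eq_bigr => i _; rewrite !mxE.
have /matrixP /(_ (enum_rank s) (enum_rank t)) := mulmx1C AB.
rewrite !mxE (inj_eq enum_rank_inj) => <-.
by apply: eq_bigr => j _; rewrite !mxE !enum_rankK.
Qed.

Definition Qf A (u : Ket C T) := \sum_s \sum_t (u s)^* * A s t * u t.
Definition coef v j (u : Ket C T) := \sum_t (v j t)^* * u t.

Lemma coefC v j u : (coef v j u)^* = \sum_t v j t * (u t)^*.
Proof. by rewrite /coef rmorph_sum; apply: eq_bigr => t _; rewrite rmorphM /= conjCK. Qed.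

Lemma sum_delta (F : 'I_#|T| -> C) k : \sum_j F j * (j == k)%:R = F k.
Proof.
by rewrite (bigD1 k) //= eqxx mulr1 big1 ?addr0 // => j /negbTE ->; rewrite mulr0.
Qed.

Lemma sum_deltaT (F : T -> C) k : \sum_j F j * (j == k)%:R = F k.
Proof.
by rewrite (bigD1 k) //= eqxx mulr1 big1 ?addr0 // => j /negbTE ->; rewrite mulr0.
Qed.

Lemma decomp_eig {A asc l v} : sorted_spec_decomp A asc l v ->
  forall k s, \sum_t A s t * v k t = l k * v k s.
Proof.
case=> ov _ _ hA k s.
transitivity (\sum_j l j * v j s * \sum_t (v j t)^* * v k t).
  under eq_bigr do rewrite hA big_distrl.
  rewrite exchange_big /=; apply: eq_bigr => j _; rewrite big_distrr.
  by apply: eq_bigr => t _ /=; rewrite !mulrA.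
under eq_bigr do rewrite ov.
rewrite (bigD1 k) //= eqxx mulr1 big1 ?addr0 //.
by move=> j /negbTE; rewrite eq_sym => ->; rewrite mulr0.
Qed.

Lemma quad_decomp {A asc l v} : sorted_spec_decomp A asc l v ->
  forall u, Qf A u = \sum_j l j * ((coef v j u)^* * coef v j u).
Proof.
case=> ov _ _ hA u; rewrite /Qf.
under eq_bigr => s _ do under eq_bigr => t _ do
  rewrite hA big_distrr big_distrl /=.
under eq_bigr => s _ do rewrite exchange_big /=.
rewrite exchange_big /=; apply: eq_bigr => j _.
rewrite coefC /coef big_distrl big_distrr /=; apply: eq_bigr => s _.
rewrite big_distrr big_distrr /=; apply: eq_bigr => t _ /=.
ring.
Qed.

Lemma parseval {v} : Defs.orthonormal v ->
  forall u, \sum_j (coef v j u)^* * coef v j u = \sum_t (u t)^* * u t.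
Proof.
move=> ov u; have cv := orth_complete ov.
transitivity (\sum_s \sum_t (u s)^* * u t * \sum_j v j s * (v j t)^*).
  under eq_bigr => j _ do rewrite coefC /coef big_distrl /=.
  under eq_bigr => j _ do under eq_bigr => s _ do rewrite big_distrr /=.
  rewrite exchange_big /=; apply: eq_bigr => s _.
  rewrite exchange_big /=; apply: eq_bigr => t _.
  rewrite big_distrr /=; apply: eq_bigr => j _; ring.
apply: eq_bigr => s _; under eq_bigr do rewrite cv.
by rewrite (bigD1 s) //= eqxx mulr1 big1 ?addr0 // => t; rewrite eq_sym => /negbTE ->; rewrite mulr0.
Qed.

Lemma trace_decomp {A asc l v} : sorted_spec_decomp A asc l v ->
  tr A = \sum_j l j.
Proof.
case=> ov _ _ hA; rewrite /tr.
under eq_bigr do rewrite hA.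
rewrite exchange_big /=; apply: eq_bigr => j _.
have o1 := ov j j; rewrite eqxx mulr1n in o1.
rewrite -[RHS]mulr1 -o1 big_distrr /=.
by apply: eq_bigr => t _; ring.
Qed.

Lemma energy_decomp {H asc l v} (q : 'I_#|T| -> C) : sorted_spec_decomp H asc l v ->
  tr (mulop (fun s t => \sum_j q j * v j s * (v j t)^*) H) = \sum_j q j * l j.
Proof.
move=> hd; have := decomp_eig hd; case: hd => ov _ _ _ he.
rewrite /tr /mulop.
transitivity (\sum_j q j * \sum_u (v j u)^* * \sum_s H u s * v j s).
  under eq_bigr => s _ do under eq_bigr => u _ do rewrite big_distrl /=.
  under eq_bigr => s _ do rewrite exchange_big /=.
  rewrite exchange_big /=; apply: eq_bigr => j _.
  rewrite exchange_big big_distrr /=; apply: eq_bigr => u _.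
  rewrite !big_distrr /=; apply: eq_bigr => s _; ring.
apply: eq_bigr => j _; under eq_bigr do rewrite he.
have o1 := ov j j; rewrite eqxx mulr1n in o1.
rewrite -[l j in RHS]mulr1 -o1 big_distrr /=.
by rewrite !big_distrr; apply: eq_bigr => t _ /=; ring.
Qed.

Lemma sort_rel n (r : rel 'I_n) : total r -> transitive r -> reflexive r ->
  exists sg : 'I_n -> 'I_n, injective sg /\
    forall i j : 'I_n, (i <= j)%N -> r (sg i) (sg j).
Proof.
move=> rtot rtr rrf.
pose s := sort r (enum 'I_n).
have ss : size s = n by rewrite size_sort size_enum_ord.
have us : uniq s by rewrite sort_uniq enum_uniq.
have so : sorted r s := sort_sorted rtot _.
exists (fun i => nth i s i); split.
  move=> i j /eqP; rewrite (set_nth_default i j) ?ss // nth_uniq ?ss //.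
  by move=> /eqP /val_inj.
move=> i j hij; rewrite (set_nth_default i j) ?ss //.
have := sorted_leq_nth rtr rrf i so => /(_ i j); rewrite !inE ss.
by move=> /(_ (ltn_ord i) (ltn_ord j) hij).
Qed.

Lemma sort_exists n (f : 'I_n -> C) (asc : bool) : (forall j, f j \is Num.real) ->
  exists sg : 'I_n -> 'I_n, injective sg /\
    forall i j : 'I_n, (i <= j)%N -> if asc then f (sg i) <= f (sg j) else f (sg j) <= f (sg i).
Proof.
move=> fr; case: asc.
  apply: (@sort_rel n (fun i j : 'I_n => f i <= f j)).
  - by move=> i j; rewrite real_leVge.
  - by move=> j i k h1 h2; exact: le_trans h1 h2.
  - by move=> i.
apply: (@sort_rel n (fun i j : 'I_n => f j <= f i)).
- by move=> i j; rewrite real_leVge.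
- by move=> j i k h1 h2; exact: le_trans h2 h1.
- by move=> i.
Qed.

Local Open Scope sesquilinear_scope.

Lemma sum_enum_rank (G : 'I_#|T| -> C) : \sum_t G (enum_rank t) = \sum_i G i.
Proof.
rewrite (big_enum_val (A:=predT) (fun t => G (enum_rank t))) /=.
by apply: eq_bigr => i _; rewrite enum_valK.
Qed.

Lemma exists_decomp A asc : (forall s t, A t s = (A s t)^*) ->
  exists l v, sorted_spec_decomp A asc l v.
Proof.
move=> hA.
pose M : 'M[C]_#|T| := \matrix_(i, j) A (enum_val i) (enum_val j).
have Mh : M \is hermsymmx.
  apply/is_hermitianmxP; rewrite expr0 scale1r; apply/matrixP => i j.
  by rewrite !mxE hA.
have Pu := spectral_unitarymx M.
have eM := orthomx_spectralP (hermitian_normalmx Mh).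
rewrite invmx_unitary // in eM.
have Dr := hermitian_spectral_diag_real Mh.
set P := spectralmx M in eM Pu; set D := spectral_diag M in eM Dr.
pose l0 j := D 0 j.
pose v0 (j : 'I_#|T|) (t : T) := (P j (enum_rank t))^*.
have l0r j : l0 j \is Num.real by exact: (mxOverP Dr).
have [sg [sgi sgm]] := @sort_exists _ l0 asc l0r.
exists (fun j => l0 (sg j)), (fun j => v0 (sg j)); split => //.
- move=> j k; rewrite /v0.
  have /matrixP /(_ (sg j) (sg k)) := unitarymxP Pu.
  rewrite !mxE (inj_eq sgi) => <-.
  rewrite (sum_enum_rank (fun i => (P (sg j) i)^*^* * (P (sg k) i)^*)) /=.
  by apply: eq_bigr => t _; rewrite conjCK !mxE.
- move=> s t.
  have -> : A s t = M (enum_rank s) (enum_rank t) by rewrite mxE !enum_rankK.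
  rewrite eM mxE.
  rewrite (reindex_inj sgi) /=.
  apply: eq_bigr => j _; rewrite !mxE /v0 conjCK.
  rewrite (bigD1 (sg j)) //= big1 ?addr0.
    by rewrite !mxE eqxx mulr1n /l0; ring.
  by move=> k hk; rewrite !mxE (negbTE hk) mulr0n mulr0.
Qed.

Definition herm A := forall s t, A t s = (A s t)^*.

Lemma eigsys_spec A asc : herm A ->
  sorted_spec_decomp A asc (eigsys A asc).1 (eigsys A asc).2.
Proof.
move=> hA; rewrite /eigsys.
apply: (epsilon_spec (@eigsys_inhabited C T) (fun p => sorted_spec_decomp A asc p.1 p.2)).
by have [l [v h]] := exists_decomp A asc hA; exists (l, v).
Qed.

Lemma herm_decomp {A asc l v} : sorted_spec_decomp A asc l v -> herm A.
Proof.
case=> _ lr _ hA s t; rewrite !hA rmorph_sum; apply: eq_bigr => j _ /=.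
by rewrite !rmorphM /= conjCK (conj_Creal (lr j)); ring.
Qed.

Lemma coef_conj v f j k : coef v k (f j) = (coef f j (v k))^*.
Proof. by rewrite coefC /coef; apply: eq_bigr => t _; rewrite mulrC. Qed.

Lemma coef_eq {A asc asc' l v m f} : sorted_spec_decomp A asc l v ->
  sorted_spec_decomp A asc' m f -> forall j k,
  m j * coef f j (v k) = l k * coef f j (v k).
Proof.
move=> hv hf j k; have hA := herm_decomp hv.
have ev := decomp_eig hv; have ef := decomp_eig hf.
have [_ mr _ _] := hf.
transitivity (\sum_u (\sum_t (f j t)^* * A t u) * v k u).
  have -> : m j * coef f j (v k) = \sum_u (m j * f j u)^* * v k u.
    rewrite /coef big_distrr; apply: eq_bigr => u _ /=.
    by rewrite rmorphM /= (conj_Creal (mr j)); ring.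
  apply: eq_bigr => u _; rewrite -ef rmorph_sum; congr (_ * _).
  by apply: eq_bigr => t _ /=; rewrite rmorphM /= [in RHS]hA mulrC.
rewrite /coef.
under eq_bigr do rewrite big_distrl /=.
rewrite exchange_big /= big_distrr /=; apply: eq_bigr => t _.
rewrite mulrCA -ev big_distrr; apply: eq_bigr => u _ /=; ring.
Qed.

Lemma orth_norm1 v k : Defs.orthonormal v -> \sum_t (v k t)^* * v k t = 1.
Proof. by move=> ov; rewrite ov eqxx. Qed.

Lemma match_eigs {A asc asc' l v m f} : sorted_spec_decomp A asc l v ->
  sorted_spec_decomp A asc' m f ->
  (forall k, exists j, l k = m j) /\ (forall j, exists k, l k = m j).
Proof.
move=> hv hf; have ce := coef_eq hv hf.
have [ov _ _ _] := hv; have [ofh _ _ _] := hf.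
split.
  move=> k; have := parseval ofh (v k); rewrite orth_norm1 // => hs.
  have [j _ hj] : exists2 j, true & coef f j (v k) != 0.
    apply/exists_inP; apply: contraT; rewrite negb_exists_in => /forall_inP h0.
    by move: hs; rewrite big1 => [/eqP|j _]; [rewrite eq_sym oner_eq0|rewrite (eqP (negbNE (h0 j _))) ?mulr0].
  by exists j; apply/eqP; rewrite -(inj_eq (mulIf hj)) (ce j k).
move=> j; have := parseval ov (f j); rewrite orth_norm1 // => hs.
have [k _ hk] : exists2 k, true & coef v k (f j) != 0.
  apply/exists_inP; apply: contraT; rewrite negb_exists_in => /forall_inP h0.
  by move: hs; rewrite big1 => [/eqP|k _]; [rewrite eq_sym oner_eq0|rewrite (eqP (negbNE (h0 k _))) ?mulr0].
exists k; rewrite coef_conj conjC_eq0 in hk.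
by apply/eqP; rewrite -(inj_eq (mulIf hk)) (ce j k).
Qed.

Lemma equi_decomp (H : Op C T) (eps : C) : equispaced H eps ->
  exists f, sorted_spec_decomp H true (fun j : 'I_#|T| => (j : nat)%:R * eps) f.
Proof.
case=> e0 [f [ofh hf]]; exists f; split => //.
- by move=> j; rewrite rpredM ?realn ?gtr0_real.
- by move=> i j hij; rewrite ler_pM2r // ler_nat.
Qed.

Lemma equi_eigs (H : Op C T) (eps : C) l v : equispaced H eps -> sorted_spec_decomp H true l v ->
  forall k, l k = (k : nat)%:R * eps.
Proof.
move=> he hv; have [f hf] := equi_decomp _ _ he.
have e0 : eps != 0 by case: he => h _; rewrite gt_eqF.
have epos : 0 < eps by case: he.
have [m1 m2] := match_eigs hv hf.
have ex k : exists j : 'I_#|T|, l k == (j : nat)%:R * eps.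
  by have [j hj] := m1 k; exists j; rewrite hj.
pose sg k := xchoose (ex k).
have hsg k : l k = (sg k : nat)%:R * eps := eqP (xchooseP (ex k)).
have sgsurj j : exists k, sg k = j.
  have [k hk] := m2 j; exists k; move: hk; rewrite hsg => /(mulIf e0) /eqP.
  by rewrite eqr_nat => /eqP h; exact: val_inj h.
have sgi : injective sg.
  have : #|[seq sg x | x in (predT : {pred 'I_#|T|})]| == #|(predT : {pred 'I_#|T|})|.
    apply/eqP; apply: eq_card => j; rewrite !inE.
    by have [k <-] := sgsurj j; apply/imageP; exists k.
  by move/image_injP => h x y hxy; apply: h.
have sgm (i j : 'I_#|T|) : (i <= j)%N -> (sg i <= sg j)%N.
  move=> hij; have [_ _ so _] := hv; have := so i j hij.
  by rewrite !hsg ler_pM2r // ler_nat.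
by move=> k; rewrite hsg (ord_mono_id _ _ sgi sgm).
Qed.

Definition nrm (u : Ket C T) := \sum_t (u t)^* * u t.

Lemma cc_ge0 (x : C) : 0 <= x^* * x.
Proof. by rewrite mulrC mul_conjC_ge0. Qed.

Lemma nrm_ge0 u : 0 <= nrm u.
Proof. by apply: sumr_ge0 => t _; exact: cc_ge0. Qed.

Lemma Qf_eig {A asc l v} : sorted_spec_decomp A asc l v -> forall k, Qf A (v k) = l k.
Proof.
move=> hv k; rewrite (quad_decomp hv); have [ov _ _ _] := hv.
have co j : coef v j (v k) = (j == k)%:R by exact: ov.
rewrite (bigD1 k) //= big1 ?addr0.
  by rewrite co eqxx conjC1 !mulr1.
by move=> j hj; rewrite co (negbTE hj) conjC0 mul0r mulr0.
Qed.

Lemma rayleigh {A l v} : sorted_spec_decomp A true l v ->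
  forall (lo hi : 'I_#|T|), (forall j : 'I_#|T|, (lo <= j)%N && (j <= hi)%N) ->
  forall u, l lo * nrm u <= Qf A u /\ Qf A u <= l hi * nrm u.
Proof.
move=> hv lo hi hb u; rewrite (quad_decomp hv); have [ov _ so _] := hv.
rewrite /nrm -(parseval ov u) !big_distrr /=; split; apply: ler_sum => j _.
  by apply: ler_wpM2r; [exact: cc_ge0|]; apply: so; case/andP: (hb j).
by apply: ler_wpM2r; [exact: cc_ge0|]; apply: so; case/andP: (hb j).
Qed.

Lemma sum_ind0 (h0 : (0 < #|T|)%N) (F : 'I_#|T| -> C) :
  \sum_(j < #|T|) ((j : nat) == 0)%:R * F j = F (Ordinal h0).
Proof.
rewrite (bigD1 (Ordinal h0)) //= ?eqxx ?mulr1n mul1r big1 ?addr0 //.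
move=> j hj; have -> : ((j : nat) == 0) = false.
  by apply/negbTE; apply: contra hj => /eqP h; apply/eqP; apply: val_inj.
by rewrite mul0r.
Qed.

Lemma pure_eigs (psi : Ket C T) p w : \sum_t psi t * (psi t)^* = 1 ->
  sorted_spec_decomp (outer psi psi) false p w ->
  forall (h0 : (0 < #|T|)%N) k, p k = ((k : nat) == 0)%:R.
Proof.
move=> hn hd h0; have ev := decomp_eig hd; have [ow pr so hr] := hd.
have tr1 : \sum_j p j = 1.
  rewrite -(trace_decomp hd) /tr /outer -hn; apply: eq_bigr => t _; by [].
have p01 k : (p k == 0) || (p k == 1).
  pose c := \sum_t (psi t)^* * w k t.
  have e1 s : psi s * c = p k * w k s.
    by rewrite -ev /c /outer big_distrr; apply: eq_bigr => t _ /=; ring.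
  have e2 : c = p k * c.
    transitivity (\sum_s (psi s)^* * (psi s * c)).
      rewrite -[LHS]mul1r -hn big_distrl /=.
      by apply: eq_bigr => s _; ring.
    rewrite /c big_distrr; apply: eq_bigr => s _ /=; rewrite e1; ring.
  have e3 : p k = c^* * c.
    rewrite -[p k]mulr1 -(orth_norm1 w k ow) big_distrr /=.
    transitivity (\sum_s (w k s)^* * (psi s * c)).
      by apply: eq_bigr => s _; rewrite e1; ring.
    transitivity ((\sum_s (w k s)^* * psi s) * c).
      by rewrite big_distrl; apply: eq_bigr => s _ /=; ring.
    congr (_ * _).
    by rewrite /c rmorph_sum; apply: eq_bigr => s _ /=; rewrite rmorphM /= conjCK mulrC.
  have [c0|cn0] := eqVneq c 0.
    by rewrite e3 c0 mulr0 eqxx.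
  apply/orP; right; apply/eqP; apply: (mulIf cn0); rewrite mul1r; exact/esym.
have pge0 k : 0 <= p k by case/orP: (p01 k) => /eqP ->; rewrite ?ler01.
pose k0 := Ordinal h0.
have pk0 : p k0 = 1.
  case/orP: (p01 k0) => /eqP // h.
  move: tr1; rewrite big1 => [/eqP|k _]; first by rewrite eq_sym oner_eq0.
  have : p k <= p k0 by apply: so.
  case/orP: (p01 k) => /eqP -> //; rewrite h => h10.
  by move: (ltr01 : (0:C) < 1); rewrite lt_leAnge h10 andbF.
move=> k; have [->|hk] := eqVneq k k0; first by rewrite pk0.
have : \sum_(j | j != k0) p j = 0.
  by move: tr1; rewrite (bigD1 k0) //= pk0 => /(congr1 (fun x => x - 1)); rewrite addrC addrK subrr.
move/(psumr_eq0P (fun j _ => pge0 j))/(_ k hk) => ->.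
suff : ((k : nat) == 0) = false by move=> ->.
by apply/negbTE; apply: contra hk => /eqP h; apply/eqP; apply: val_inj.
Qed.

Lemma outer_herm (psi : Ket C T) : herm (outer psi psi).
Proof. by move=> s t; rewrite /outer rmorphM /= conjCK mulrC. Qed.

Lemma cap_pure (psi : Ket C T) (H : Op C T) (h0 : (0 < #|T|)%N) :
  \sum_t psi t * (psi t)^* = 1 -> herm H ->
  capacity (outer psi psi) H =
  (eigsys H true).1 (rev_ord (Ordinal h0)) - (eigsys H true).1 (Ordinal h0).
Proof.
move=> hn hH.
have hp := eigsys_spec _ false (outer_herm psi).
have pe := pure_eigs _ _ _ hn hp h0.
have hh := eigsys_spec _ true hH.
rewrite /capacity /active_energy /passive_energy /active /passive /ham_basis.
rewrite (energy_decomp (fun j => state_eigs (outer psi psi) (rev_ord j)) hh).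
rewrite (energy_decomp (state_eigs (outer psi psi)) hh).
rewrite (reindex_inj rev_ord_inj) /=.
under eq_bigr do rewrite rev_ordK /state_eigs pe.
under [X in _ - X]eq_bigr do rewrite /state_eigs pe.
by rewrite !sum_ind0.
Qed.

Lemma cap_equi (rho H : Op C T) (eps : C) : herm rho -> tr rho = 1 -> equispaced H eps ->
  capacity rho H = (#|T| - 1)%:R * eps - 2 * passive_energy rho H.
Proof.
move=> hr t1 he.
have [f hf] := equi_decomp _ _ he.
have hH := herm_decomp hf.
have hp := eigsys_spec _ false hr.
have hh := eigsys_spec _ true hH.
have el := equi_eigs _ _ _ _ he hh.
rewrite /capacity /active_energy /passive_energy /active /passive /ham_basis.
rewrite (energy_decomp (fun j => state_eigs rho (rev_ord j)) hh).
rewrite (energy_decomp (state_eigs rho) hh).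
rewrite (reindex_inj rev_ord_inj) /=.
under eq_bigr do rewrite rev_ordK el.
under [X in _ = _ - 2 * X]eq_bigr do rewrite el.
have sp : \sum_j state_eigs rho j = 1 by rewrite -(trace_decomp hp).
have -> : \sum_j state_eigs rho j * ((rev_ord j : nat)%:R * eps) =
  \sum_j state_eigs rho j * ((#|T| - 1)%:R * eps) - \sum_j state_eigs rho j * ((j : nat)%:R * eps).
  rewrite -sumrB; apply: eq_bigr => j _.
  have -> : ((#|T| - 1)%:R : C) = (rev_ord j : nat)%:R + (j : nat)%:R.
    rewrite -natrD; congr (_%:R); rewrite /=; move: (ltn_ord j); move: (nat_of_ord j) => m; case: #|T| => [|d] /= hm; lia.
  ring.
have e2 : \sum_j state_eigs rho j * (eigsys H true).1 j = \sum_j state_eigs rho j * ((j : nat)%:R * eps) by apply: eq_bigr => j _; rewrite el.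
rewrite e2 -big_distrl /= sp mul1r; ring.
Qed.

End Gen.

Section Qubit.
Variable C : numClosedFieldType.
Variable n : nat.
Variable X : {set 'I_n}.

Definition join (x : conf X) (y : conf (~: X)) : qconf n :=
  [ffun i => if insub i is Some j then x j else if insub i is Some j' then y j' else false].

Lemma restr_join1 x y : restr X (join x y) = x.
Proof. by apply/ffunP => j; rewrite !ffunE valK. Qed.

Lemma restr_join2 x y : restr (~: X) (join x y) = y.
Proof.
apply/ffunP => j; rewrite !ffunE insubF ?valK //.
by have := valP j; rewrite inE => /negbTE.
Qed.

Lemma join_restr a : join (restr X a) (restr (~: X) a) = a.
Proof.
apply/ffunP => i; rewrite ffunE; case: insubP => [j _ <-|hi]; first by rewrite ffunE.
case: insubP => [j _ <-|hi']; first by rewrite ffunE.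
by move: hi'; rewrite inE hi.
Qed.

Lemma sum_join (F : qconf n -> C) : \sum_a F a = \sum_x \sum_y F (join x y).
Proof.
rewrite pair_big /=.
rewrite (reindex (fun p : conf X * conf (~: X) => join p.1 p.2)) //=.
exists (fun a => (restr X a, restr (~: X) a)) => [[x y] _|a _] /=.
  by rewrite restr_join1 restr_join2.
by rewrite join_restr.
Qed.

Lemma restr_eq a a' :
  (restr X a == restr X a') && (restr (~: X) a == restr (~: X) a') = (a == a').
Proof.
apply/andP/eqP => [[/eqP h1 /eqP h2]|->]; last by [].
by rewrite -(join_restr a) -(join_restr a') h1 h2.
Qed.

End Qubit.
Arguments join {n X}.

Section Qubit2.
Variable C : numClosedFieldType.
Variable n : nat.

Lemma ptrace_tr (Y : {set 'I_n}) (psi : Ket C (qconf n)) : normalized psi ->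
  tr (ptrace Y (outer psi psi)) = 1.
Proof.
move=> hn; rewrite /tr /ptrace -hn.
rewrite exchange_big /=; apply: eq_bigr => a _; rewrite exchange_big /=.
rewrite (bigD1 a) //= [X in _ + X]big1 ?addr0.
  rewrite (bigD1 (restr Y a)) //= !eqxx /= big1 ?addr0 //.
  by move=> x hx; rewrite eq_sym (negbTE hx).
move=> a' ha'; apply: big1 => x _.
case: ifP => // /and3P [/eqP h1 /eqP h2 h3].
have : (a == a') by rewrite -(@restr_eq _ Y) h1 h2 eqxx h3.
by rewrite eq_sym (negbTE ha').
Qed.

Lemma ptrace_herm (Y : {set 'I_n}) (rho : Op C (qconf n)) : herm rho -> herm (ptrace Y rho).
Proof.
move=> hr x x'; rewrite /ptrace rmorph_sum.
under [RHS]eq_bigr do rewrite rmorph_sum.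
rewrite [RHS]exchange_big /=.
apply: eq_bigr => a _; apply: eq_bigr => a' _ /=.
rewrite (fun_if Num.conj) rmorph0 -hr.
by rewrite [restr (~: Y) a' == _]eq_sym andbCA.
Qed.

Lemma bip_herm (Y : {set 'I_n}) (HY : Op C (conf Y)) (HYc : Op C (conf (~: Y))) :
  herm HY -> herm HYc -> herm (bipartite_ham HY HYc).
Proof.
move=> h1 h2 a a'; rewrite /bipartite_ham rmorphD !rmorphM /= !rmorph_nat -h1 -h2.
by rewrite ![restr _ a' == _]eq_sym.
Qed.

End Qubit2.

Section Qubit3.
Variable C : numClosedFieldType.
Variable n : nat.
Variable X : {set 'I_n}.

Lemma Qf_bip (HX : Op C (conf X)) (HXc : Op C (conf (~: X))) (u : Ket C (qconf n)) :
  Qf (bipartite_ham HX HXc) u =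
  \sum_y Qf HX (fun x => u (join x y)) + \sum_x Qf HXc (fun y => u (join x y)).
Proof.
pose U (x : conf X) (y : conf (~: X)) := u (join x y).
rewrite /Qf (@sum_join C n X).
under eq_bigr => x _ do under eq_bigr => y _ do rewrite (@sum_join C n X).
transitivity (\sum_x \sum_y (\sum_x' \sum_y'
    ((U x y)^* * HX x x' * (y == y')%:R * U x' y') +
    \sum_x' \sum_y' ((U x y)^* * (x == x')%:R * HXc y y' * U x' y'))).
  apply: eq_bigr => x _; apply: eq_bigr => y _.
  rewrite -big_split /=; apply: eq_bigr => x' _; rewrite -big_split /=.
  apply: eq_bigr => y' _; rewrite /bipartite_ham !restr_join1 !restr_join2 /U; ring.
under eq_bigr do rewrite big_split /=.
rewrite big_split /=; congr (_ + _).
  rewrite exchange_big /=; apply: eq_bigr => y _; apply: eq_bigr => x _.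
  apply: eq_bigr => x' _; rewrite (bigD1 y) //= eqxx mulr1 [X in _ + X]big1 ?addr0 //.
  by move=> y' hy'; rewrite eq_sym (negbTE hy') mulr0 mul0r.
apply: eq_bigr => x _; apply: eq_bigr => y _; rewrite exchange_big /=.
apply: eq_bigr => y' _; rewrite (bigD1 x) //= eqxx mulr1 [X in _ + X]big1 ?addr0 //.
by move=> x' hx'; rewrite eq_sym (negbTE hx') mulr0 !mul0r.
Qed.

Lemma nrm_join1 (u : Ket C (qconf n)) : nrm u = \sum_(y : conf (~: X)) nrm (fun x : conf X => u (join x y)).
Proof. by rewrite /nrm (@sum_join C n X) exchange_big. Qed.

Lemma nrm_join2 (u : Ket C (qconf n)) : nrm u = \sum_(x : conf X) nrm (fun y : conf (~: X) => u (join x y)).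
Proof. by rewrite /nrm (@sum_join C n X). Qed.

Definition pv (f : Ket C (conf X)) (g : Ket C (conf (~: X))) : Ket C (qconf n) :=
  fun a => f (restr X a) * g (restr (~: X) a).

Lemma pv_join f g x y : pv f g (join x y) = f x * g y.
Proof. by rewrite /pv restr_join1 restr_join2. Qed.

End Qubit3.
Arguments pv {C n X}.

Section Gen2.
Context {C : numClosedFieldType} {T : finType}.

Lemma Qf_scaler (A : Op C T) (f : Ket C T) (c : C) :
  Qf A (fun x => f x * c) = c^* * c * Qf A f.
Proof.
rewrite /Qf big_distrr; apply: eq_bigr => s _; rewrite big_distrr; apply: eq_bigr => t _ /=.
by rewrite rmorphM /=; ring.
Qed.

Lemma Qf_scalel (A : Op C T) (f : Ket C T) (c : C) :
  Qf A (fun x => c * f x) = c^* * c * Qf A f.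
Proof.
rewrite /Qf big_distrr; apply: eq_bigr => s _; rewrite big_distrr; apply: eq_bigr => t _ /=.
by rewrite rmorphM /=; ring.
Qed.

Lemma nrm_scaler (f : Ket C T) (c : C) : nrm (fun x => f x * c) = c^* * c * nrm f.
Proof. by rewrite /nrm big_distrr; apply: eq_bigr => t _ /=; rewrite rmorphM /=; ring. Qed.

Lemma nrm_scalel (f : Ket C T) (c : C) : nrm (fun x => c * f x) = c^* * c * nrm f.
Proof. by rewrite /nrm big_distrr; apply: eq_bigr => t _ /=; rewrite rmorphM /=; ring. Qed.

Lemma Qf_ext (A : Op C T) (u u' : Ket C T) : (forall x, u x = u' x) -> Qf A u = Qf A u'.
Proof. by move=> e; rewrite /Qf; apply: eq_bigr => s _; apply: eq_bigr => t _; rewrite !e. Qed.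

Lemma nrm_ext (u u' : Ket C T) : (forall x, u x = u' x) -> nrm u = nrm u'.
Proof. by move=> e; rewrite /nrm; apply: eq_bigr => s _; rewrite !e. Qed.

Lemma equi_bounds (H : Op C T) (eps : C) (h0 : (0 < #|T|)%N) (u : Ket C T) :
  equispaced H eps -> 0 <= Qf H u /\ Qf H u <= (#|T| - 1)%:R * eps * nrm u.
Proof.
move=> he; have [f hf] := equi_decomp _ _ he.
have hb : forall j : 'I_#|T|, (Ordinal h0 <= j)%N && (j <= rev_ord (Ordinal h0))%N.
  by move=> j; rewrite /=; move: (ltn_ord j); move: (nat_of_ord j) => m; case: #|T| => [|d] /= hm; lia.
have [h1 h2] := rayleigh hf _ _ hb u.
by move: h1 h2; rewrite /= !mul0r.
Qed.

End Gen2.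

Lemma conf_gt0 (n : nat) (Y : {set 'I_n}) : (0 < #|conf Y|)%N.
Proof. by apply/card_gt0P; exists [ffun _ => false]. Qed.

Section Qubit4.
Variable C : numClosedFieldType.
Variable n : nat.
Variable X : {set 'I_n}.

Lemma Htot_lo_hi (HX : Op C (conf X)) (HXc : Op C (conf (~: X))) eX eXc
  (h0 : (0 < #|qconf n|)%N) :
  equispaced HX eX -> equispaced HXc eXc ->
  (eigsys (bipartite_ham HX HXc) true).1 (Ordinal h0) = 0 /\
  (eigsys (bipartite_ham HX HXc) true).1 (rev_ord (Ordinal h0)) =
    (#|conf X| - 1)%:R * eX + (#|conf (~: X)| - 1)%:R * eXc.
Proof.
move=> heX heXc.
have [f hf] := equi_decomp _ _ heX; have [g hg] := equi_decomp _ _ heXc.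
have hH := @bip_herm C n X HX HXc (herm_decomp hf) (herm_decomp hg).
have hd := eigsys_spec _ true hH.
set L := (eigsys _ true).1 in hd *; set v := (eigsys _ true).2 in hd.
have [ov _ _ _] := hd; have [ofh _ _ _] := hf; have [ogh _ _ _] := hg.
have hb : forall j : 'I_#|qconf n|, (Ordinal h0 <= j)%N && (j <= rev_ord (Ordinal h0))%N.
  by move=> j; rewrite /=; move: (ltn_ord j); move: (nat_of_ord j) => m; case: #|qconf n| => [|d] /= hm; lia.
have ray := rayleigh hd _ _ hb.
have hX0 := conf_gt0 _ X; have hXc0 := conf_gt0 _ (~: X).
pose MX : C := (#|conf X| - 1)%:R * eX.
pose MXc : C := (#|conf (~: X)| - 1)%:R * eXc.
have Qpv (i : 'I_#|conf X|) (k : 'I_#|conf (~: X)|) :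
    Qf (bipartite_ham HX HXc) (pv (f i) (g k)) = (i : nat)%:R * eX + (k : nat)%:R * eXc.
  have e1 y : Qf HX (fun x => pv (f i) (g k) (join x y)) = (g k y)^* * g k y * ((i : nat)%:R * eX).
    rewrite (Qf_ext _ _ (fun x => f i x * g k y)); last by move=> x; rewrite pv_join.
    by rewrite Qf_scaler (Qf_eig hf).
  have e2 x : Qf HXc (fun y => pv (f i) (g k) (join x y)) = (f i x)^* * f i x * ((k : nat)%:R * eXc).
    rewrite (Qf_ext _ _ (fun y => f i x * g k y)); last by move=> y; rewrite pv_join.
    by rewrite Qf_scalel (Qf_eig hg).
  rewrite Qf_bip; congr (_ + _).
    by under eq_bigr do rewrite e1; rewrite -big_distrl /= (orth_norm1 g k ogh) mul1r.
  by under eq_bigr do rewrite e2; rewrite -big_distrl /= (orth_norm1 f i ofh) mul1r.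
have npv (i : 'I_#|conf X|) (k : 'I_#|conf (~: X)|) : nrm (pv (f i) (g k)) = 1.
  have e1 x : nrm (fun y => pv (f i) (g k) (join x y)) = (f i x)^* * f i x * 1.
    rewrite (nrm_ext _ (fun y => f i x * g k y)); last by move=> y; rewrite pv_join.
    by rewrite nrm_scalel /nrm (orth_norm1 g k ogh).
  rewrite (@nrm_join2 C n X); under eq_bigr do rewrite e1.
  by rewrite -big_distrl /= (orth_norm1 f i ofh) mul1r.
have Qv k : Qf (bipartite_ham HX HXc) (v k) = L k by exact: (Qf_eig hd k).
have nv k : nrm (v k) = 1 by exact: orth_norm1 v k ov.
have bnd u : 0 <= Qf (bipartite_ham HX HXc) u /\
             Qf (bipartite_ham HX HXc) u <= (MX + MXc) * nrm u.
  rewrite Qf_bip; split.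
    apply: addr_ge0; apply: sumr_ge0 => y _.
      exact: (equi_bounds HX eX hX0 (fun x => u (join x y)) heX).1.
    exact: (equi_bounds HXc eXc hXc0 (fun z => u (join y z)) heXc).1.
  rewrite mulrDl {1}(@nrm_join1 C n X u) (@nrm_join2 C n X u) !big_distrr /=.
  apply: lerD; apply: ler_sum => y _.
    exact: (equi_bounds HX eX hX0 (fun x => u (join x y)) heX).2.
  exact: (equi_bounds HXc eXc hXc0 (fun z => u (join y z)) heXc).2.
split.
  apply: le_anti; apply/andP; split.
    have [h1 _] := ray (pv (f (Ordinal hX0)) (g (Ordinal hXc0))).
    by move: h1; rewrite npv Qpv mulr1 /= !mul0r addr0.
  by rewrite -Qv; case: (bnd (v (Ordinal h0))).
apply: le_anti; apply/andP; split.
  by rewrite -Qv; case: (bnd (v (rev_ord (Ordinal h0)))) => _; rewrite nv mulr1.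
have [_ h2] := ray (pv (f (rev_ord (Ordinal hX0))) (g (rev_ord (Ordinal hXc0)))).
by move: h2; rewrite npv Qpv mulr1.
Qed.

End Qubit4.

Lemma gap_pointwise (C : numClosedFieldType) (n : nat) (psi : Ket C (qconf n))
    (X : {set 'I_n}) (HX : Op C (conf X)) (HXc : Op C (conf (~: X))) eX eXc :
  normalized psi -> equispaced HX eX -> equispaced HXc eXc ->
  capacity_gap psi X HX HXc = 2 * ergo_gap psi X HX HXc.
Proof.
move=> hn heX heXc; rewrite /capacity_gap /ergo_gap; case: ifP => _; first by rewrite mulr0.
have h0 : (0 < #|qconf n|)%N by apply/card_gt0P; exists [ffun _ => false].
have [f hf] := equi_decomp _ _ heX; have [g hg] := equi_decomp _ _ heXc.
have hH := @bip_herm C n X HX HXc (herm_decomp hf) (herm_decomp hg).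
rewrite (cap_pure psi _ h0 hn hH).
have [-> ->] := @Htot_lo_hi C n X HX HXc eX eXc h0 heX heXc.
have hr := outer_herm psi.
rewrite (cap_equi _ _ _ (@ptrace_herm C n X _ hr) (@ptrace_tr C n X psi hn) heX).
rewrite (cap_equi _ _ _ (@ptrace_herm C n (~: X) _ hr) (@ptrace_tr C n (~: X) psi hn) heXc).
ring.
Qed.

Theorem theorem1 (C : numClosedFieldType) (n : nat) (s : {set 'I_n})
    (psi : Ket C (qconf n))
    (HX : forall X : {set 'I_n}, Op C (conf X))
    (HXc : forall X : {set 'I_n}, Op C (conf (~: X)))
    (epsX epsXc : {set 'I_n} -> C) :
  normalized psi ->
  (forall X : {set 'I_n}, X \in powerset s -> X != set0 ->
     equispaced (HX X) (epsX X) /\ equispaced (HXc X) (epsXc X)) ->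
  M_B s psi HX HXc = 2 * M_E s psi HX HXc /\
  (forall X : {set 'I_n}, X \in powerset s -> X != set0 ->
     capacity_gap psi X (HX X) (HXc X) = 2 * ergo_gap psi X (HX X) (HXc X)).
Proof.
move=> hn hyp.
have pw : forall X : {set 'I_n}, X \in powerset s -> X != set0 ->
     capacity_gap psi X (HX X) (HXc X) = 2 * ergo_gap psi X (HX X) (HXc X).
  move=> X hX hX0; have [h1 h2] := hyp X hX hX0.
  exact: gap_pointwise hn h1 h2.
split => //.
rewrite /M_B /M_E mulrCA; congr (_ * _); rewrite big_distrr /=.
apply: eq_bigr => X hX; have [->|hX0] := eqVneq X set0; last exact: pw.
by rewrite /capacity_gap /ergo_gap eqxx /= mulr0.
Qed.
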